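(* Let $x\in(0,1)$ be irrational, and let $p^E_n/q^E_n$ ($n\ge1$) be the EICF convergents of $1-x$. Put $P_n=q^E_n-p^E_n$ and $Q_n=q^E_n$, so $P_n/Q_n=1-p^E_n/q^E_n$. For every $n\ge1$ such that $P_n$ and $Q_n$ are both odd, $P_n/Q_n$ is a best $1$-rational approximation of $x$, and hence is a principal convergent of the OOCF expansion of $x$.
   Context: Rationals are written $p/q$ with $p\in\mathbb Z$, $q\in\mathbb N$, $\gcd(p,q)=1$; $p/q$ is a $1$-rational if $p,q$ are both odd. For irrational $x$, a $1$-rational $p/q$ is a best $1$-rational approximation of $x$ if $|qx-p|<|bx-a|$ for every $1$-rational $a/b\ne p/q$ with $0<b\le q$. EICF: the map $T_E:[0,1]\to[0,1]$ is $T_E(y)=\frac1y-2k$ for $y\in[\frac1{2k+1},\frac1{2k}]$, $T_E(y)=2k-\frac1y$ for $y\in[\frac1{2k},\frac1{2k-1}]$ ($k\ge1$), $T_E(0)=0$. For irrational $y\in(0,1)$, its EICF digits are $(b_n,\eta_n)=(2k,1)$ if $T_E^{n-1}(y)\in[\frac1{2k+1},\frac1{2k}]$ and $(2k,-1)$ if $T_E^{n-1}(y)\in[\frac1{2k},\frac1{2k-1}]$, and its $n$-th EICF convergent is $p^E_n/q^E_n=\cfrac{1}{b_1+\cfrac{\eta_1}{b_2+\cfrac{\eta_2}{\ddots+\cfrac{\eta_{n-1}}{b_n}}}}$ in lowest terms with $q^E_n>0$. OOCF: digits $D=\{(1,1)\}\cup\{(a,\varepsilon):a\ge2,\ \varepsilon=\pm1\}$;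 $B(k+1,-1)=[\frac{k-1}{k},\frac{2k-1}{2k+1}]$, $B(k,1)=[\frac{2k-1}{2k+1},\frac{k}{k+1}]$ ($k\ge1$); $T(x)=\frac{kx-(k-1)}{k-(k+1)x}$ on $B(k+1,-1)$, $T(x)=\frac{k-(k+1)x}{kx-(k-1)}$ on $B(k,1)$, $T(1)=1$. The OOCF expansion of irrational $x\in(0,1)$ is the unique sequence $(a_n,\varepsilon_n)\in D$ with $T^{n-1}(x)\in B(a_n,\varepsilon_n)$ for all $n\ge1$; its $n$-th principal convergent is $1-\cfrac{1}{a_1+\cfrac{\varepsilon_1}{2-\cfrac{1}{\ddots\ \cfrac{\varepsilon_{n-1}}{2-\cfrac{1}{a_n+\varepsilon_n/2}}}}}$. *)

(* Defs.v *)
From Stdlib Require Import Reals ZArith.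
Open Scope R_scope.

Definition irrational (x : R) : Prop :=
  forall p q : Z, q <> 0%Z -> x <> IZR p / IZR q.

(* floor r = up r - 1  (up r is the unique integer with r < up r <= r + 1) *)
Definition Zfloor (r : R) : Z := (up r - 1)%Z.

(* the k with 1/y in [2k-1, 2k+1] (for 0 < y <= 1) *)
Definition eicf_k (y : R) : Z := Zfloor ((/ y + 1) / 2).

(* T_E : [0,1] -> [0,1];  T_E(y) = 1/y - 2k on [1/(2k+1),1/(2k)],
   T_E(y) = 2k - 1/y on [1/(2k),1/(2k-1)], T_E(0) = 0 *)
Definition TE (y : R) : R :=
  if Req_EM_T y 0 then 0
  else let k := IZR (eicf_k y) in
       if Rle_dec (2 * k) (/ y) then / y - 2 * k else 2 * k - / y.

Definition eicf_digit_ok (y : R) (b eta : Z) : Prop :=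
  exists k : Z, (1 <= k)%Z /\ b = (2 * k)%Z /\
    ((eta = 1%Z /\ / (2 * IZR k + 1) <= y <= / (2 * IZR k)) \/
     (eta = (-1)%Z /\ / (2 * IZR k) <= y <= / (2 * IZR k - 1))).

Fixpoint eicf_tail (b eta : nat -> Z) (i l : nat) : R :=
  match l with
  | O => IZR (b i)
  | S l' => IZR (b i) + IZR (eta i) / eicf_tail b eta (S i) l'
  end.

Definition eicf_conv (b eta : nat -> Z) (n : nat) : R :=
  / eicf_tail b eta 1 (n - 1).

(* the k with x in [(k-1)/k, k/(k+1)) *)
Definition oocf_k (x : R) : Z := Zfloor (/ (1 - x)).

(* T on B(k+1,-1) = [(k-1)/k,(2k-1)/(2k+1)] and B(k,1) = [(2k-1)/(2k+1),k/(k+1)] *)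
Definition Toocf (x : R) : R :=
  if Req_EM_T x 1 then 1
  else let k := IZR (oocf_k x) in
       if Rle_dec x ((2 * k - 1) / (2 * k + 1))
       then (k * x - (k - 1)) / (k - (k + 1) * x)
       else (k - (k + 1) * x) / (k * x - (k - 1)).

Definition oocf_D (a e : Z) : Prop :=
  (a = 1%Z /\ e = 1%Z) \/ ((2 <= a)%Z /\ (e = 1%Z \/ e = (-1)%Z)).

Definition oocf_B (a e : Z) (y : R) : Prop :=
  (e = 1%Z /\ (2 * IZR a - 1) / (2 * IZR a + 1) <= y <= IZR a / (IZR a + 1)) \/
  (e = (-1)%Z /\ let k := IZR a - 1 in (k - 1) / k <= y <= (2 * k - 1) / (2 * k + 1)).

Fixpoint oocf_tail (a e : nat -> Z) (i l : nat) : R :=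
  match l with
  | O => IZR (a i) + IZR (e i) / 2
  | S l' => IZR (a i) + IZR (e i) / (2 - / oocf_tail a e (S i) l')
  end.

Definition oocf_conv (a e : nat -> Z) (n : nat) : R :=
  1 - / oocf_tail a e 1 (n - 1).

Definition is_oocf_expansion (x : R) (a e : nat -> Z) : Prop :=
  forall n : nat, (1 <= n)%nat ->
    oocf_D (a n) (e n) /\ oocf_B (a n) (e n) (Nat.iter (n - 1) Toocf x).

Definition oocf_principal_convergent (x : R) (p q : Z) : Prop :=
  exists a e : nat -> Z, is_oocf_expansion x a e /\
    exists n : nat, (1 <= n)%nat /\ IZR p / IZR q = oocf_conv a e n.

Definition one_rational (p q : Z) : Prop :=
  (0 < q)%Z /\ Z.gcd p q = 1%Z /\ Z.odd p = true /\ Z.odd q = true.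

Definition best_one_rational_approx (x : R) (p q : Z) : Prop :=
  one_rational p q /\
  forall a b : Z, one_rational a b -> IZR a / IZR b <> IZR p / IZR q ->
    (0 < b <= q)%Z ->
    Rabs (IZR q * x - IZR p) < Rabs (IZR b * x - IZR a).

(* Main.v *)
Require Import Defs.
From Stdlib Require Import Reals ZArith Lra Lia Psatz.
Open Scope R_scope.


Lemma Zfloor_spec r : IZR (Defs.Zfloor r) <= r < IZR (Defs.Zfloor r) + 1.
Proof.
  unfold Defs.Zfloor. rewrite minus_IZR. destruct (archimed r) as [H1 H2]. simpl. lra.
Qed.

Lemma IZR_lt_succ_le m k : IZR m < IZR k + 1 -> (m <= k)%Z.
Proof. intro H. rewrite <- plus_IZR in H. apply lt_IZR in H. lia. Qed.

Lemma inv_bounds lo hi r : 0 < lo -> lo <= r <= hi -> / hi <= / r <= / lo.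
Proof.
  intros H0 [H1 H2]. split; apply Rinv_le_contravar; lra.
Qed.

Lemma te_step r bb et : eicf_digit_ok r bb et ->
  0 < r <= 1 /\ IZR bb + IZR et * TE r = / r.
Proof.
  intros [k [Hk [Hb Hc]]]. subst bb.
  assert (Hk1 : 1 <= IZR k) by (apply IZR_le; lia).
  rewrite mult_IZR. simpl (IZR 2).
  assert (Hr : 0 < r /\ r <= 1).
  { destruct Hc as [[_ [H1 H2]]|[_ [H1 H2]]].
    - split. eapply Rlt_le_trans; [|exact H1]. apply Rinv_0_lt_compat. lra.
      eapply Rle_trans; [exact H2|]. rewrite <- Rinv_1. apply Rinv_le_contravar; lra.
    - split. eapply Rlt_le_trans; [|exact H1]. apply Rinv_0_lt_compat. lra.
      eapply Rle_trans; [exact H2|]. rewrite <- Rinv_1. apply Rinv_le_contravar; lra. }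
  split; [exact Hr|].
  unfold TE. destruct (Req_EM_T r 0) as [e|_]; [lra|].
  unfold eicf_k. cbv zeta.
  match goal with |- context [Defs.Zfloor ?z] => pose proof (Zfloor_spec z) as Hm; set (m := Defs.Zfloor z) in * end.
  destruct Hc as [[He [H1 H2]]|[He [H1 H2]]]; subst et; simpl (IZR 1); simpl (IZR (-1)).
  - assert (Hw : 2 * IZR k <= / r <= 2 * IZR k + 1).
    { assert (Hp : 0 < / (2 * IZR k + 1)) by (apply Rinv_0_lt_compat; lra).
      pose proof (inv_bounds _ _ _ Hp (conj H1 H2)) as [A B].
      rewrite !Rinv_inv in A, B. lra. }
    assert (m <= k + 1)%Z by (apply IZR_lt_succ_le; rewrite plus_IZR; simpl; lra).
    assert (k <= m)%Z by (apply IZR_lt_succ_le; lra).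
    assert (Hmk : m = k \/ m = (k+1)%Z) by lia.
    destruct (Rle_dec (2 * IZR m) (/ r)); destruct Hmk as [E|E]; rewrite E in *;
      rewrite ?plus_IZR in *; try (simpl (IZR 1) in *); lra.
  - assert (Hw : 2 * IZR k - 1 <= / r <= 2 * IZR k).
    { assert (Hp : 0 < / (2 * IZR k)) by (apply Rinv_0_lt_compat; lra).
      pose proof (inv_bounds _ _ _ Hp (conj H1 H2)) as [A B].
      rewrite !Rinv_inv in A, B. lra. }
    assert (m <= k)%Z by (apply IZR_lt_succ_le; lra).
    assert (k <= m)%Z by (apply IZR_lt_succ_le; lra).
    assert (E : m = k) by lia. rewrite E in *.
    destruct (Rle_dec (2 * IZR k) (/ r)); lra.
Qed.


Record mat := Mk { mA : Z; mP : Z; mB : Z; mQ : Z }.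

Definition mob (M : mat) (s : R) : R :=
  (IZR (mA M) * s + IZR (mP M)) / (IZR (mB M) * s + IZR (mQ M)).

Definition estep (M : mat) (bb et : Z) : mat :=
  Mk (et * mP M) (mA M + bb * mP M) (et * mQ M) (mB M + bb * mQ M).

Fixpoint ME (b eta : nat -> Z) (n : nat) : mat :=
  match n with
  | O => Mk 1 0 0 1
  | S m => estep (ME b eta m) (b (S m)) (eta (S m))
  end.

Definition edig (bb et : Z) : Prop :=
  (2 <= bb)%Z /\ Z.odd bb = false /\ (et = 1 \/ et = -1)%Z.

Lemma digit_ok_edig r bb et : eicf_digit_ok r bb et -> edig bb et.
Proof.
  intros [k [Hk [Hb Hc]]]. subst. split; [lia|split].
  - rewrite Z.odd_mul. reflexivity.
  - destruct Hc as [[H _]|[H _]]; lia.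
Qed.

Definition minv (M : mat) : Prop :=
  (0 < mQ M)%Z /\ (Z.abs (mB M) < mQ M)%Z /\
  (mA M * mQ M - mB M * mP M = 1 \/ mA M * mQ M - mB M * mP M = -1)%Z /\
  Z.odd (mQ M) = Z.odd (mA M) /\ Z.odd (mP M) = Z.odd (mB M) /\
  Z.odd (mP M) = negb (Z.odd (mA M)).

Lemma estep_inv M bb et : minv M -> edig bb et ->
  minv (estep M bb et) /\ mB (estep M bb et) <> 0%Z.
Proof.
  destruct M as [A P B Q]. unfold minv, estep, edig; simpl.
  intros [HQ [HB [Hd [H1 [H2 H3]]]]] [Hb [Hbo He]].
  assert (bb * Q >= 2 * Q)%Z by nia.
  assert (Hdet : (et * P * (B + bb * Q) - et * Q * (A + bb * P) = - et * (A * Q - B * P))%Z) by ring.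
  repeat split.
  - lia.
  - destruct He; subst; lia.
  - rewrite Hdet. destruct He; destruct Hd as [E|E]; rewrite E; subst; lia.
  - rewrite Z.odd_add, Z.odd_mul, Z.odd_mul, Hbo. destruct He; subst; simpl.
    all: destruct (Z.odd B); rewrite ?H2, ?H3; auto; congruence.
  - rewrite Z.odd_add, !Z.odd_mul, Hbo. destruct He; subst; simpl.
    all: rewrite H1; destruct (Z.odd A); reflexivity.
  - rewrite Z.odd_add, !Z.odd_mul, Hbo. destruct He; subst; simpl.
    all: rewrite H3; destruct (Z.odd A); reflexivity.
  - destruct He; subst; lia.
Qed.

Lemma ME_inv b eta n : (forall i, (1 <= i)%nat -> edig (b i) (eta i)) ->
  minv (ME b eta n) /\ ((1 <= n)%nat -> mB (ME b eta n) <> 0%Z).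
Proof.
  intros Hd. induction n as [|n IH].
  - split; [|lia]. unfold minv; simpl. repeat split; lia || reflexivity.
  - simpl. destruct IH as [IH _].
    destruct (estep_inv _ _ _ IH (Hd (S n) ltac:(lia))) as [A B]. auto.
Qed.

Lemma mob_estep M bb et s : minv M -> edig bb et -> 0 <= s <= 1 ->
  mob M (/ (IZR bb + IZR et * s)) = mob (estep M bb et) s.
Proof.
  destruct M as [A P B Q]. unfold minv, edig, mob, estep; simpl.
  intros [HQ [HB _]] [Hb [_ He]] Hs.
  assert (Hb' : 2 <= IZR bb) by (apply IZR_le; lia).
  assert (HD : 1 <= IZR bb + IZR et * s) by (destruct He; subst; simpl; lra).
  assert (HBQ : - IZR Q < IZR B < IZR Q).
  { rewrite <- opp_IZR. split; apply IZR_lt; lia. }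
  rewrite !plus_IZR, !mult_IZR.
  assert (H2 : IZR B + IZR Q * (IZR bb + IZR et * s) > 0).
  { assert (IZR Q * (IZR bb + IZR et * s) >= IZR Q * 1) by (apply Rle_ge, Rmult_le_compat_l; lra). lra. }
  field. split; lra.
Qed.

Lemma ME_y y b eta
  (hexp : forall n : nat, (1 <= n)%nat ->
            eicf_digit_ok (Nat.iter (n - 1) TE y) (b n) (eta n)) :
  forall n, y = mob (ME b eta n) (Nat.iter n TE y).
Proof.
  assert (Hd : forall i, (1 <= i)%nat -> edig (b i) (eta i))
    by (intros i Hi; exact (digit_ok_edig _ _ _ (hexp i Hi))).
  induction n as [|n IH].
  - unfold mob; simpl. field.
  - pose proof (hexp (S n) ltac:(lia)) as H1. replace (S n - 1)%nat with n in H1 by lia.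
    pose proof (hexp (S (S n)) ltac:(lia)) as H2. replace (S (S n) - 1)%nat with (S n) in H2 by lia.
    destruct (te_step _ _ _ H1) as [_ E1]. destruct (te_step _ _ _ H2) as [R2 _].
    simpl in R2. simpl ME. rewrite <- mob_estep.
    + rewrite IH at 1. f_equal. simpl Nat.iter. rewrite E1. rewrite Rinv_inv. reflexivity.
    + apply (ME_inv b eta n Hd).
    + apply Hd; lia.
    + simpl. lra.
Qed.

Fixpoint FE (b eta : nat -> Z) (i l : nat) (s : R) : R :=
  match l with
  | O => / (IZR (b i) + IZR (eta i) * s)
  | S l' => / (IZR (b i) + IZR (eta i) * FE b eta (S i) l' s)
  end.

Lemma FE_tail b eta l : forall i, / eicf_tail b eta i l = FE b eta i l 0.
Proof.
  induction l as [|l IH]; intro i; simpl.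
  - f_equal. ring.
  - rewrite <- IH. unfold Rdiv. reflexivity.
Qed.

Lemma FE_snoc b eta l : forall i s,
  FE b eta i (S l) s = FE b eta i l (/ (IZR (b (i + l + 1)%nat) + IZR (eta (i + l + 1)%nat) * s)).
Proof.
  induction l as [|l IH]; intros i s.
  - simpl. replace (i + 0 + 1)%nat with (S i) by lia. reflexivity.
  - change (FE b eta i (S (S l)) s) with (/ (IZR (b i) + IZR (eta i) * FE b eta (S i) (S l) s)).
    rewrite IH. replace (S i + l + 1)%nat with (i + S l + 1)%nat by lia. reflexivity.
Qed.

Lemma FE_ME b eta (Hd : forall i, (1 <= i)%nat -> edig (b i) (eta i)) l :
  forall s, 0 <= s <= 1 -> FE b eta 1 l s = mob (ME b eta (S l)) s.
Proof.
  induction l as [|l IH]; intros s Hs.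
  - cbn [FE ME estep mob mA mP mB mQ]. unfold mob. cbn [mA mP mB mQ]. destruct (Hd 1%nat ltac:(lia)) as [Hb [_ He]].
    assert (2 <= IZR (b 1%nat)) by (apply IZR_le; lia).
    assert (1 <= IZR (b 1%nat) + IZR (eta 1%nat) * s) by (destruct He as [E|E]; rewrite E; simpl; lra).
    unfold estep; cbn [mA mP mB mQ]. rewrite ?plus_IZR, ?mult_IZR. field. lra.
  - rewrite FE_snoc. replace (1 + l + 1)%nat with (S (S l)) by lia.
    destruct (Hd (S (S l)) ltac:(lia)) as [Hb [_ He]].
    assert (2 <= IZR (b (S (S l)))) by (apply IZR_le; lia).
    assert (1 <= IZR (b (S (S l))) + IZR (eta (S (S l))) * s) by (destruct He as [E|E]; rewrite E; simpl; nra).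
    rewrite IH.
    + change (ME b eta (S (S l))) with (estep (ME b eta (S l)) (b (S (S l))) (eta (S (S l)))).
      apply mob_estep; [apply ME_inv; auto | apply Hd; lia | lra].
    + split.
      * left. apply Rinv_0_lt_compat. lra.
      * rewrite <- Rinv_1. apply Rinv_le_contravar; lra.
Qed.

Lemma eicf_conv_ME b eta (Hd : forall i, (1 <= i)%nat -> edig (b i) (eta i)) n :
  (1 <= n)%nat -> eicf_conv b eta n = mob (ME b eta n) 0.
Proof.
  intro Hn. unfold eicf_conv. rewrite FE_tail. rewrite FE_ME by (auto; lra).
  f_equal. f_equal. lia.
Qed.


Lemma div_le_iff a c z : 0 < c -> (a / c <= z <-> a <= z * c).
Proof.
  intro Hc. split; intro H.
  - apply Rmult_le_compat_r with (r := c) in H; [|lra].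
    replace (a / c * c) with a in H by (field; lra). exact H.
  - apply Rmult_le_reg_r with c; [lra|]. replace (a / c * c) with a by (field; lra). exact H.
Qed.

Lemma le_div_iff a c z : 0 < c -> (z <= a / c <-> z * c <= a).
Proof.
  intro Hc. split; intro H.
  - apply Rmult_le_compat_r with (r := c) in H; [|lra].
    replace (a / c * c) with a in H by (field; lra). exact H.
  - apply Rmult_le_reg_r with c; [lra|]. replace (a / c * c) with a by (field; lra). exact H.
Qed.

Definition odig (z : R) : Z * Z :=
  let k := oocf_k z in
  if Rle_dec z ((2 * IZR k - 1) / (2 * IZR k + 1)) then ((k + 1)%Z, (-1)%Z) else (k, 1%Z).

Definition gmob (a e : Z) (s : R) : R := / (IZR a + IZR e / (2 - s)).

Lemma oocf_step z : 0 <= z < 1 ->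
  oocf_D (fst (odig z)) (snd (odig z)) /\ oocf_B (fst (odig z)) (snd (odig z)) z /\
  0 <= Toocf z <= 1 /\ 1 - z = gmob (fst (odig z)) (snd (odig z)) (1 - Toocf z).
Proof.
  intros Hz.
  assert (Hk := Zfloor_spec (/ (1 - z))).
  assert (Hu : 0 < 1 - z) by lra.
  assert (Hw : / (1 - z) * (1 - z) = 1) by (field; lra).
  assert (Hw1 : 1 <= / (1 - z)).
  { rewrite <- Rinv_1. apply Rinv_le_contravar; lra. }
  unfold odig, Toocf, oocf_k.
  destruct (Req_EM_T z 1) as [E|_]; [lra|]. cbv zeta.
  set (k := Defs.Zfloor (/ (1 - z))) in *.
  assert (Hk1 : (1 <= k)%Z).
  { assert (0 < IZR k) by lra. apply lt_IZR in H. lia. }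
  assert (HK : 1 <= IZR k) by (apply IZR_le; lia).
  assert (Hlo : IZR k * (1 - z) <= 1) by nra.
  assert (Hhi : 1 < (IZR k + 1) * (1 - z)) by nra.
  destruct (Rle_dec z ((2 * IZR k - 1) / (2 * IZR k + 1))) as [Hle|Hgt]; simpl.
  - apply le_div_iff in Hle; [|lra].
    assert (HD : 0 < IZR k - (IZR k + 1) * z) by nra.
    repeat split.
    + right. split; [lia | right; reflexivity].
    + right. split; [reflexivity|]. cbv zeta. rewrite plus_IZR. simpl (IZR 1).
      replace (IZR k + 1 - 1) with (IZR k) by ring. split.
      * apply div_le_iff; lra.
      * apply le_div_iff; lra.
    + apply le_div_iff; lra.
    + apply div_le_iff; lra.
    + unfold gmob. rewrite plus_IZR. simpl (IZR 1). simpl (IZR (-1)).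
      field. split; [lra|]. split; [|lra]. nra.
  - assert (Hgt' : (2 * IZR k - 1) < z * (2 * IZR k + 1)).
    { destruct (Rlt_le_dec ((2 * IZR k - 1)) (z * (2 * IZR k + 1))) as [h|h]; [exact h|].
      exfalso. apply Hgt. apply le_div_iff; lra. }
    assert (HD : 0 < IZR k * z - (IZR k - 1)) by nra.
    repeat split.
    + destruct (Z.eq_dec k 1) as [E|E]; [left; split; auto | right; split; [lia|left; reflexivity]].
    + left. split; [reflexivity|]. split.
      * apply div_le_iff; lra.
      * apply le_div_iff; lra.
    + apply le_div_iff; lra.
    + apply div_le_iff; lra.
    + unfold gmob. simpl (IZR 1).
      field. split; [lra|]. split; [|lra]. nra.
Qed.

Definition gstep (M : mat) (a e : Z) : mat :=
  Mk (- mA M - a * mP M) (2 * mA M + (2 * a + e) * mP M)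
     (- mB M - a * mQ M) (2 * mB M + (2 * a + e) * mQ M).

Definition minvo (M : mat) : Prop :=
  (0 < mQ M)%Z /\ (- mQ M < mB M <= 0)%Z /\
  (mA M * mQ M - mB M * mP M = 1 \/ mA M * mQ M - mB M * mP M = -1)%Z /\
  Z.odd (mA M) = true /\ Z.odd (mP M) = false /\ Z.odd (mQ M) = true.

Lemma gstep_inv M a e : minvo M -> oocf_D a e ->
  minvo (gstep M a e) /\ (mQ M < mQ (gstep M a e))%Z.
Proof.
  destruct M as [A P B Q]. unfold minvo, gstep, oocf_D; cbn [mA mP mB mQ].
  intros [HQ [HB [Hd [H1 [H2 H3]]]]] HD.
  assert (Ha : (1 <= a)%Z /\ (e = 1 \/ e = -1)%Z /\ (1 <= a + e)%Z) by lia.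
  destruct Ha as [Ha [He Hae]].
  assert (a * Q >= Q)%Z by nia.
  assert (HaQ : (e = -1 -> a * Q >= 2 * Q)%Z) by (intro; assert (2 <= a)%Z by lia; nia).
  assert (HeQ : (e * Q = Q \/ e * Q = - Q)%Z) by (destruct He; subst; lia).
  assert (HBeQ : (e = -1 -> e * Q = -Q)%Z) by (intro; subst; lia).
  assert (Hdet : ((- A - a * P) * (2 * B + (2 * a + e) * Q) - (- B - a * Q) * (2 * A + (2 * a + e) * P)
                  = - e * (A * Q - B * P))%Z) by ring.
  repeat split.
  - destruct He; subst e; nia.
  - destruct He; subst e; nia.
  - destruct He; subst e; nia.
  - rewrite Hdet. destruct He; destruct Hd as [E|E]; rewrite E; subst; lia.
  - rewrite Z.odd_sub, Z.odd_opp, Z.odd_mul, H1, H2. destruct (Z.odd a); reflexivity.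
  - rewrite Z.odd_add, !Z.odd_mul, H2, Bool.andb_false_r. reflexivity.
  - rewrite Z.odd_add, !Z.odd_mul, H3, Z.odd_add, Z.odd_mul. simpl.
    destruct He; subst; reflexivity.
  - destruct He; subst e; nia.
Qed.

Lemma mob_gstep M a e s : minvo M -> oocf_D a e -> 0 <= s <= 1 ->
  mob M (gmob a e s) = mob (gstep M a e) s.
Proof.
  destruct M as [A P B Q]. unfold minvo, oocf_D, mob, gstep, gmob; cbn [mA mP mB mQ].
  intros [HQ [HB _]] HD Hs.
  assert (Ha : (1 <= a)%Z /\ (e = 1 \/ e = -1)%Z /\ (1 <= a + e)%Z) by lia.
  destruct Ha as [Ha [He Hae]].
  assert (Ha' : 1 <= IZR a) by (apply IZR_le; lia).
  assert (Hae' : 1 <= IZR a + IZR e) by (rewrite <- plus_IZR; apply IZR_le; lia).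
  assert (HQ' : 0 < IZR Q) by (apply IZR_lt; lia).
  assert (HB1 : - IZR Q < IZR B) by (rewrite <- opp_IZR; apply IZR_lt; lia).
  assert (HB2 : IZR B <= 0) by (apply IZR_le; lia).
  assert (HBaQ : 0 < IZR B + IZR a * IZR Q) by nra.
  assert (HE : IZR e = 1 \/ IZR e = -1) by (destruct He as [E|E]; rewrite E; [left|right]; reflexivity).
  assert (Hden : 1 <= IZR a * (2 - s) + IZR e) by (destruct HE as [E|E]; rewrite E; nra).
  assert (Hden2 : 0 < IZR B * (2 - s) + IZR Q * (IZR a * (2 - s) + IZR e))
    by (destruct HE as [E|E]; rewrite E; nra).
  rewrite ?plus_IZR, ?minus_IZR, ?opp_IZR, ?mult_IZR. simpl (IZR 2).
  rewrite ?plus_IZR, ?mult_IZR. simpl (IZR 2).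
  replace (/ (IZR a + IZR e / (2 - s))) with ((2 - s) / (IZR a * (2 - s) + IZR e)) by (field; lra).
  field. lra.
Qed.

Fixpoint MO (a e : nat -> Z) (n : nat) : mat :=
  match n with
  | O => Mk 1 0 0 1
  | S m => gstep (MO a e m) (a (S m)) (e (S m))
  end.

Lemma mob_rat y M s r t : irrational y -> y = mob M s ->
  IZR (mB M) * s + IZR (mQ M) <> 0 -> t <> 0%Z -> s <> IZR r / IZR t.
Proof.
  intros Hi Hy Hd Ht Hs. apply (Hi (mA M * r + mP M * t)%Z (mB M * r + mQ M * t)%Z).
  - intro E. apply Hd. assert (IZR (mB M * r + mQ M * t) = 0) by (rewrite E; reflexivity).
    rewrite plus_IZR, !mult_IZR in H. rewrite Hs.
    assert (IZR t <> 0) by (apply not_0_IZR; exact Ht).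
    apply Rmult_eq_reg_r with (IZR t); auto. field_simplify; auto. lra.
  - rewrite Hy. unfold mob. rewrite Hs. rewrite !plus_IZR, !mult_IZR.
    assert (IZR t <> 0) by (apply not_0_IZR; exact Ht).
    assert (IZR (mB M) * (IZR r / IZR t) + IZR (mQ M) <> 0) by (rewrite <- Hs; exact Hd).
    assert (IZR (mB M) * IZR r + IZR (mQ M) * IZR t <> 0).
    { intro E. apply H0. replace (IZR (mB M) * (IZR r / IZR t) + IZR (mQ M))
        with ((IZR (mB M) * IZR r + IZR (mQ M) * IZR t) / IZR t) by (field; auto).
      rewrite E. unfold Rdiv. ring. }
    field. auto.
Qed.

Lemma minvo_den M s : minvo M -> 0 <= s <= 1 -> 0 < IZR (mB M) * s + IZR (mQ M).
Proof.
  intros [HQ [HB _]] Hs.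
  assert (0 < IZR (mQ M)) by (apply IZR_lt; lia).
  assert (- IZR (mQ M) < IZR (mB M)) by (rewrite <- opp_IZR; apply IZR_lt; lia).
  assert (IZR (mB M) <= 0) by (apply IZR_le; lia).
  nra.
Qed.

Definition zz (x : R) (m : nat) : R := Nat.iter m Toocf x.
Definition aa (x : R) (m : nat) : Z := fst (odig (zz x (m - 1))).
Definition ee (x : R) (m : nat) : Z := snd (odig (zz x (m - 1))).

Lemma aa_S x m : aa x (S m) = fst (odig (zz x m)).
Proof. unfold aa. f_equal. f_equal. f_equal. lia. Qed.
Lemma ee_S x m : ee x (S m) = snd (odig (zz x m)).
Proof. unfold ee. f_equal. f_equal. f_equal. lia. Qed.

Lemma orbit x (hx : 0 < x < 1) (hirr : irrational (1 - x)) m :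
  0 <= zz x m < 1 /\ minvo (MO (aa x) (ee x) m) /\ 1 - x = mob (MO (aa x) (ee x) m) (1 - zz x m)
  /\ oocf_D (aa x (S m)) (ee x (S m)) /\ oocf_B (aa x (S m)) (ee x (S m)) (zz x m).
Proof.
  induction m as [|m [Hz [Hinv [Hy [HD HB]]]]].
  - assert (Hz : 0 <= zz x 0 < 1) by (unfold zz; simpl; lra).
    destruct (oocf_step _ Hz) as [D1 [B1 _]].
    split; [exact Hz|]. split.
    + unfold minvo; simpl. repeat split; lia || reflexivity.
    + split; [unfold mob, zz; simpl; field|].
      rewrite aa_S, ee_S. auto.
  - destruct (oocf_step _ Hz) as [D1 [B1 [T1 E1]]].
    rewrite <- aa_S in D1, B1, E1. rewrite <- ee_S in D1, B1, E1.
    assert (Hinv' : minvo (MO (aa x) (ee x) (S m))).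
    { simpl. apply gstep_inv; auto. }
    assert (Hy' : 1 - x = mob (MO (aa x) (ee x) (S m)) (1 - zz x (S m))).
    { rewrite Hy. rewrite E1. simpl MO. change (zz x (S m)) with (Toocf (zz x m)). apply mob_gstep; auto. lra. }
    assert (Hz' : 0 <= zz x (S m) < 1).
    { change (zz x (S m)) with (Toocf (zz x m)). split; [lra|].
      destruct (Rle_lt_or_eq _ _ (proj2 T1)) as [h|h]; [exact h|exfalso].
      apply (mob_rat _ _ _ 0 1 hirr Hy').
      - apply Rgt_not_eq, Rlt_gt, minvo_den; auto. unfold zz in *. simpl. lra.
      - lia.
      - change (zz x (S m)) with (Toocf (zz x m)). rewrite h. simpl. field. }
    destruct (oocf_step _ Hz') as [D2 [B2 _]].
    split; [exact Hz'|split; [exact Hinv'|split; [exact Hy'|split]]].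
    + rewrite aa_S, ee_S. exact D2.
    + rewrite aa_S, ee_S. exact B2.
Qed.


Lemma gmob_range a e s : oocf_D a e -> 0 <= s <= 1 -> 0 <= gmob a e s <= 1.
Proof.
  intros HD Hs. unfold gmob, oocf_D in *.
  assert (H1 : 1 <= IZR a + IZR e / (2 - s)).
  { assert (0 < / (2 - s) <= 1).
    { split. apply Rinv_0_lt_compat; lra. rewrite <- Rinv_1. apply Rinv_le_contravar; lra. }
    unfold Rdiv.
    destruct HD as [[E1 E2]|[Ha [E|E]]]; subst; try (simpl (IZR 1)); try (simpl (IZR (-1))).
    - lra.
    - assert (2 <= IZR a) by (apply IZR_le; lia). lra.
    - assert (2 <= IZR a) by (apply IZR_le; lia). lra. }
  split. left. apply Rinv_0_lt_compat; lra.
  rewrite <- Rinv_1. apply Rinv_le_contravar; lra.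
Qed.

Fixpoint FO (a e : nat -> Z) (i l : nat) (s : R) : R :=
  match l with
  | O => gmob (a i) (e i) s
  | S l' => gmob (a i) (e i) (FO a e (S i) l' s)
  end.

Lemma FO_tail a e l : forall i, / oocf_tail a e i l = FO a e i l 0.
Proof.
  induction l as [|l IH]; intro i; simpl.
  - unfold gmob. f_equal. f_equal. f_equal. ring.
  - rewrite <- IH. reflexivity.
Qed.

Lemma FO_snoc a e l : forall i s,
  FO a e i (S l) s = FO a e i l (gmob (a (i + l + 1)%nat) (e (i + l + 1)%nat) s).
Proof.
  induction l as [|l IH]; intros i s.
  - simpl. replace (i + 0 + 1)%nat with (S i) by lia. reflexivity.
  - change (FO a e i (S (S l)) s) with (gmob (a i) (e i) (FO a e (S i) (S l) s)).
    rewrite IH. replace (S i + l + 1)%nat with (i + S l + 1)%nat by lia. reflexivity.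
Qed.

Lemma MO_inv a e (Hd : forall i, (1 <= i)%nat -> oocf_D (a i) (e i)) n : minvo (MO a e n).
Proof.
  induction n as [|n IH].
  - unfold minvo; simpl. repeat split; lia || reflexivity.
  - simpl. apply gstep_inv; auto. apply Hd; lia.
Qed.

Lemma FO_MO a e (Hd : forall i, (1 <= i)%nat -> oocf_D (a i) (e i)) l :
  forall s, 0 <= s <= 1 -> FO a e 1 l s = mob (MO a e (S l)) s.
Proof.
  induction l as [|l IH]; intros s Hs.
  - simpl. rewrite <- mob_gstep; [|unfold minvo; simpl; repeat split; lia || reflexivity|apply Hd; lia|exact Hs].
    unfold mob; simpl. field.
  - rewrite FO_snoc. replace (1 + l + 1)%nat with (S (S l)) by lia.
    rewrite IH by (apply gmob_range; auto; apply Hd; lia).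
    change (MO a e (S (S l))) with (gstep (MO a e (S l)) (a (S (S l))) (e (S (S l)))).
    apply mob_gstep; [apply MO_inv; auto | apply Hd; lia | exact Hs].
Qed.

Lemma oocf_conv_MO a e (Hd : forall i, (1 <= i)%nat -> oocf_D (a i) (e i)) n :
  (1 <= n)%nat -> oocf_conv a e n = 1 - mob (MO a e n) 0.
Proof.
  intro Hn. unfold oocf_conv. rewrite FO_tail. rewrite FO_MO by (auto; lra).
  do 3 f_equal. lia.
Qed.


Lemma decomp A P B Q c d : (A * Q - B * P = 1 \/ A * Q - B * P = -1)%Z ->
  exists u v, (u * A + v * P = c /\ u * B + v * Q = d)%Z.
Proof.
  intros [H|H].
  - exists (c * Q - d * P)%Z, (A * d - B * c)%Z. split.
    + replace ((c * Q - d * P) * A + (A * d - B * c) * P)%Z with (c * (A * Q - B * P))%Z by ring.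
      rewrite H; ring.
    + replace ((c * Q - d * P) * B + (A * d - B * c) * Q)%Z with (d * (A * Q - B * P))%Z by ring.
      rewrite H; ring.
  - exists (- (c * Q - d * P))%Z, (- (A * d - B * c))%Z. split.
    + replace (- (c * Q - d * P) * A + - (A * d - B * c) * P)%Z with (- c * (A * Q - B * P))%Z by ring.
      rewrite H; ring.
    + replace (- (c * Q - d * P) * B + - (A * d - B * c) * Q)%Z with (- d * (A * Q - B * P))%Z by ring.
      rewrite H; ring.
Qed.

Lemma parity_uv A P B Q c d u v : Z.odd A = true -> Z.odd P = false -> Z.odd Q = true ->
  Z.odd c = false -> Z.odd d = true ->
  (u * A + v * P = c)%Z -> (u * B + v * Q = d)%Z -> Z.odd u = false /\ Z.odd v = true.
Proof.
  intros HA HP HQ Hc Hd E1 E2. subst c d.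
  rewrite Z.odd_add, !Z.odd_mul, HA, HP in Hc. rewrite Bool.andb_true_r, Bool.andb_false_r in Hc.
  destruct (Z.odd u) eqn:Hu; simpl in Hc; [discriminate|]. split; auto.
  rewrite Z.odd_add, !Z.odd_mul, Hu, HQ in Hd. simpl in Hd. rewrite Bool.andb_true_r in Hd. exact Hd.
Qed.

Lemma core A P B Q c d u v y t :
  (u * A + v * P = c)%Z -> (u * B + v * Q = d)%Z ->
  y * (IZR B * t + IZR Q) = IZR A * t + IZR P -> 0 < t ->
  Rabs (IZR v * t - IZR u) > t -> IZR Q * y - IZR P <> 0 ->
  Rabs (IZR Q * y - IZR P) < Rabs (IZR d * y - IZR c).
Proof.
  intros E1 E2 Hy Ht Hvu Hd. subst c d.
  assert (Key : t * (IZR (u * B + v * Q) * y - IZR (u * A + v * P)) =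
                (IZR Q * y - IZR P) * (IZR v * t - IZR u)).
  { rewrite !plus_IZR, !mult_IZR.
    replace (t * ((IZR u * IZR B + IZR v * IZR Q) * y - (IZR u * IZR A + IZR v * IZR P)))
      with (IZR u * (y * (IZR B * t + IZR Q) - IZR Q * y) - IZR u * IZR A * t
            + t * IZR v * (IZR Q * y - IZR P)) by ring.
    rewrite Hy. ring. }
  assert (K2 : t * Rabs (IZR (u * B + v * Q) * y - IZR (u * A + v * P)) =
               Rabs (IZR Q * y - IZR P) * Rabs (IZR v * t - IZR u)).
  { assert (Et : Rabs t = t) by (apply Rabs_pos_eq; lra).
    rewrite <- Et at 1. rewrite <- !Rabs_mult. rewrite Key. reflexivity. }
  assert (0 < Rabs (IZR Q * y - IZR P)) by (apply Rabs_pos_lt; exact Hd).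
  assert (t * Rabs (IZR Q * y - IZR P) < t * Rabs (IZR (u * B + v * Q) * y - IZR (u * A + v * P))).
  { rewrite K2. rewrite Rmult_comm. apply Rmult_lt_compat_l; lra. }
  apply Rmult_lt_reg_l with t; lra.
Qed.

Lemma ineq_E B Q d u v t : Z.odd u = false -> u <> 0%Z -> Z.odd v = true ->
  B <> 0%Z -> (Z.abs B < Q)%Z -> (u * B + v * Q = d)%Z -> (0 < d <= Q)%Z ->
  0 < t < 1 -> Rabs (IZR v * t - IZR u) > t.
Proof.
  intros Hu Hu0 Hv HB HBQ Hd Hdq Ht.
  assert (Hne : u <> v) by (intro E; subst; congruence).
  assert (Hcase : ((1 <= u /\ v <= -1) \/ (u <= -1 /\ 1 <= v) \/ (1 <= v <= u - 1) \/ (u <= v - 1 /\ v <= -1))%Z).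
  { assert (v <> 0%Z) by (intro E; subst; discriminate).
    destruct (Z_lt_le_dec 0 u); destruct (Z_lt_le_dec 0 v).
    - right; right; left. split; [lia|].
      destruct (Z_lt_le_dec 0 B).
      + exfalso. nia.
      + assert (v - 1 < u)%Z.
        { destruct (Z_lt_le_dec (v - 1) u); auto. exfalso.
          assert ((v - 1) * Q >= u * Q)%Z by nia. nia. }
        lia.
    - left; lia.
    - right; left; lia.
    - right; right; right. split; [|lia].
      destruct (Z_lt_le_dec 0 B).
      + exfalso. nia.
      + assert (- v < - u)%Z.
        { destruct (Z_lt_le_dec (- v) (- u)); auto. exfalso.
          assert ((- u) * (- B) <= (- v) * (- B))%Z by nia. nia. }
        lia. }
  assert (Hr : (1 <= IZR u /\ IZR v <= -1) \/ (IZR u <= -1 /\ 1 <= IZR v) \/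
               (1 <= IZR v <= IZR u - 1) \/ (IZR u <= IZR v - 1 /\ IZR v <= -1)).
  { destruct Hcase as [[h1 h2]|[[h1 h2]|[[h1 h2]|[h1 h2]]]];
      [left|right;left|right;right;left|right;right;right];
      (split; [|try split]);
      first [apply IZR_le in h1 | apply IZR_le in h2 | idtac];
      repeat match goal with
      | h : (_ <= _)%Z |- _ => apply IZR_le in h
      end; rewrite ?minus_IZR, ?opp_IZR in *; simpl (IZR 1) in *; try lra. }
  unfold Rabs. destruct (Rcase_abs (IZR v * t - IZR u)); nra.
Qed.

Lemma ineq_O B Q d u v a e t : Z.odd u = false -> u <> 0%Z -> Z.odd v = true ->
  (- Q < B <= 0)%Z -> (0 < Q)%Z -> (u * B + v * Q = d)%Z -> (0 < d)%Z ->
  (d < 2 * B + (2 * a + e) * Q)%Z -> oocf_D a e ->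
  (e = 1%Z -> t * (2 * IZR a + 1) <= 2) -> (e = (-1)%Z -> t * (IZR a - 1) <= 1) ->
  0 < t < 1 -> (forall r s : Z, s <> 0%Z -> t <> IZR r / IZR s) ->
  Rabs (IZR v * t - IZR u) > t.
Proof.
  intros Hu Hu0 Hv HB HQ Hd Hd0 HdQ HD He1 He2 Ht Hirr.
  destruct (Rgt_or_ge (Rabs (IZR v * t - IZR u)) t) as [G|G]; [exact G|exfalso].
  assert (Hw : exists w, u = (2 * w)%Z).
  { exists (Z.div2 u). pose proof (Z.div2_odd u) as E. rewrite Hu in E. cbn [Z.b2z] in E. lia. }
  destruct Hw as [w Hw].
  assert (G1 : -t <= IZR v * t - IZR u <= t).
  { unfold Rabs in G. destruct (Rcase_abs (IZR v * t - IZR u)); lra. }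
  assert (N1 : IZR v * t - IZR u <> t).
  { intro E. destruct (Z.eq_dec v 1) as [V|V].
    - subst v. apply Hu0. apply eq_IZR. simpl in E. lra.
    - apply (Hirr u (v - 1)%Z); [lia|]. rewrite minus_IZR. simpl (IZR 1).
      assert (IZR v - 1 <> 0) by (intro X; apply V; apply eq_IZR; simpl; lra).
      apply Rmult_eq_reg_r with (IZR v - 1); auto. field_simplify; auto. lra. }
  assert (N2 : IZR v * t - IZR u <> - t).
  { intro E. destruct (Z.eq_dec v (-1)) as [V|V].
    - subst v. apply Hu0. apply eq_IZR. simpl in E. lra.
    - apply (Hirr u (v + 1)%Z); [lia|]. rewrite plus_IZR. simpl (IZR 1).
      assert (IZR v + 1 <> 0) by (intro X; apply V; apply eq_IZR; simpl; lra).
      apply Rmult_eq_reg_r with (IZR v + 1); auto. field_simplify; auto. lra. }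
  assert (S1 : (IZR v - 1) * t < IZR u < (IZR v + 1) * t) by (split; nra).
  assert (Hae : (1 <= a /\ (e = 1 \/ e = -1) /\ (e = -1 -> 2 <= a))%Z) by (unfold oocf_D in HD; lia).
  destruct Hae as [Ha [He Ha2]].
  destruct (Z_lt_le_dec 0 u) as [Up|Un].
  - assert (Vp : (1 <= v)%Z).
    { destruct (Z_lt_le_dec 0 v) as [h|h]; [lia|exfalso].
      assert (v <> 0%Z) by (intro X; subst; discriminate).
      assert (IZR v <= -1) by (apply IZR_le; lia).
      assert (0 < IZR u) by (apply IZR_lt; lia).
      nra. }
    assert (Vr : 1 <= IZR v) by (apply IZR_le; lia).
    destruct He as [E|E]; subst e.
    + assert (T1 := He1 eq_refl).
      assert (Hi : (u * (2 * a + 1) < 2 * (v + 1))%Z).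
      { apply lt_IZR. rewrite !mult_IZR, !plus_IZR. simpl (IZR 2). simpl (IZR 1).
        assert (1 <= IZR a) by (apply IZR_le; lia).
        assert (IZR u * (2 * IZR a + 1) < (IZR v + 1) * t * (2 * IZR a + 1))
          by (apply Rmult_lt_compat_r; lra).
        assert ((IZR v + 1) * (t * (2 * IZR a + 1)) <= (IZR v + 1) * 2)
          by (apply Rmult_le_compat_l; lra).
        rewrite mult_IZR; simpl (IZR 2); nra. }
      subst u. assert (v >= w * (2 * a + 1))%Z by lia.
      assert ((w - 1) * (2 * a - 1) >= 0)%Z by nia.
      assert ((2 * w - 2) * B >= - (2 * w - 2) * Q)%Z by nia.
      nia.
    + assert (T2 := He2 eq_refl). specialize (Ha2 eq_refl).
      assert (Hi : (u * (a - 1) < v + 1)%Z).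
      { apply lt_IZR. rewrite !mult_IZR, minus_IZR, plus_IZR. simpl (IZR 1).
        assert (2 <= IZR a) by (apply IZR_le; lia).
        assert (IZR u * (IZR a - 1) < (IZR v + 1) * t * (IZR a - 1))
          by (apply Rmult_lt_compat_r; lra).
        assert ((IZR v + 1) * (t * (IZR a - 1)) <= (IZR v + 1) * 1)
          by (apply Rmult_le_compat_l; lra).
        nra. }
      subst u. assert (v >= 2 * w * (a - 1))%Z by lia.
      assert (v <> 2 * w * (a - 1))%Z.
      { intro X. rewrite X in Hv. rewrite !Z.odd_mul in Hv. simpl in Hv. discriminate. }
      assert ((w - 1) * (a - 2) >= 0)%Z by nia.
      assert ((2 * w - 2) * B >= - (2 * w - 2) * Q)%Z by nia.
      nia.
  - assert (Un' : (u < 0)%Z) by lia.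
    assert (Vn : (v <= -1)%Z).
    { destruct (Z_lt_le_dec v 1) as [h|h].
      - assert (v <> 0%Z) by (intro X; subst; discriminate). lia.
      - exfalso. assert (IZR v - 1 >= 0) by (apply IZR_le in h; simpl in h; lra).
        assert (IZR u < 0) by (apply IZR_lt; lia). nra. }
    assert (Huv : (v - 1 < u)%Z).
    { apply lt_IZR. rewrite minus_IZR. simpl (IZR 1).
      assert (IZR v <= -1) by (apply IZR_le; lia). nra. }
    nia.
Qed.


Lemma frac_eq_int p q P Q : (0 < q)%Z -> (0 < Q)%Z -> Z.gcd p q = 1%Z -> Z.gcd P Q = 1%Z ->
  IZR p / IZR q = IZR P / IZR Q -> p = P /\ q = Q.
Proof.
  intros Hq HQ H1 H2 E.
  assert (Hq' : IZR q <> 0) by (apply not_0_IZR; lia).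
  assert (HQ' : IZR Q <> 0) by (apply not_0_IZR; lia).
  assert (E2 : (p * Q = P * q)%Z).
  { apply eq_IZR. rewrite !mult_IZR.
    apply Rmult_eq_reg_r with (/ (IZR q * IZR Q)).
    - replace (IZR p * IZR Q * / (IZR q * IZR Q)) with (IZR p / IZR q) by (field; auto).
      replace (IZR P * IZR q * / (IZR q * IZR Q)) with (IZR P / IZR Q) by (field; auto).
      exact E.
    - apply Rinv_neq_0_compat. apply Rmult_integral_contrapositive; auto. }
  assert (D1 : (q | Q)%Z).
  { apply Z.gauss with p. exists P. lia. rewrite Z.gcd_comm. exact H1. }
  assert (D2 : (Q | q)%Z).
  { apply Z.gauss with P. exists p. lia. rewrite Z.gcd_comm. exact H2. }
  assert (q = Q) by (apply Z.divide_antisym_nonneg; auto; lia).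
  subst Q. split; auto. nia.
Qed.

Lemma det_gcd A P B Q : (A * Q - B * P = 1 \/ A * Q - B * P = -1)%Z -> Z.gcd P Q = 1%Z.
Proof.
  intros [H|H]; apply Z.bezout_1_gcd.
  - exists (- B)%Z, A. lia.
  - exists B, (- A)%Z. lia.
Qed.

Lemma gcd_sub p q : Z.gcd p q = 1%Z -> Z.gcd (q - p) q = 1%Z.
Proof.
  intro H. apply Z.gcd_bezout in H. destruct H as [u [v H]].
  apply Z.bezout_1_gcd. exists (- u)%Z, (v + u)%Z. lia.
Qed.

Lemma irr_ne y P Q : irrational y -> (0 < Q)%Z -> IZR Q * y - IZR P <> 0.
Proof.
  intros Hi HQ E. apply (Hi P Q); [lia|].
  assert (IZR Q <> 0) by (apply not_0_IZR; lia).
  apply Rmult_eq_reg_r with (IZR Q); auto. field_simplify; auto. lra.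
Qed.

Lemma mob_rel M t : 0 < IZR (mB M) * t + IZR (mQ M) ->
  mob M t * (IZR (mB M) * t + IZR (mQ M)) = IZR (mA M) * t + IZR (mP M).
Proof. intro H. unfold mob. field. lra. Qed.

Lemma eicf_best M y t c d : minv M -> mB M <> 0%Z -> Z.odd (mQ M) = true ->
  y = mob M t -> 0 < t < 1 -> irrational y ->
  Z.odd c = false -> Z.odd d = true -> (0 < d <= mQ M)%Z ->
  IZR c / IZR d <> IZR (mP M) / IZR (mQ M) ->
  Rabs (IZR (mQ M) * y - IZR (mP M)) < Rabs (IZR d * y - IZR c).
Proof.
  intros Hinv HB0 HQo Hy Ht Hirr Hc Hd Hdq Hne.
  destruct Hinv as [HQ [HB [Hdet [P1 [P2 P3]]]]].
  assert (HA : Z.odd (mA M) = true) by congruence.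
  assert (HP : Z.odd (mP M) = false) by (rewrite P3, HA; reflexivity).
  destruct (decomp _ _ _ _ c d Hdet) as [u [v [E1 E2]]].
  destruct (parity_uv _ _ _ _ _ _ _ _ HA HP HQo Hc Hd E1 E2) as [Hu Hv].
  assert (Hu0 : u <> 0%Z).
  { intro U. subst u. apply Hne. simpl in E1, E2. subst c d.
    rewrite !mult_IZR. assert (IZR v <> 0) by (apply not_0_IZR; intro X; subst; discriminate).
    assert (IZR (mQ M) <> 0) by (apply not_0_IZR; lia). field. auto. }
  assert (Hden : 0 < IZR (mB M) * t + IZR (mQ M)).
  { assert (- IZR (mQ M) < IZR (mB M) < IZR (mQ M)) by (rewrite <- opp_IZR; split; apply IZR_lt; lia).
    nra. }
  apply (core (mA M) (mP M) (mB M) (mQ M) c d u v y t E1 E2).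
  - rewrite Hy. apply mob_rel. exact Hden.
  - lra.
  - apply (ineq_E (mB M) (mQ M) d u v t Hu Hu0 Hv HB0 HB E2 Hdq Ht).
  - apply irr_ne; auto.
Qed.

Lemma oocf_strong M y t a e c d : minvo M -> y = mob M t -> oocf_D a e -> oocf_B a e (1 - t) ->
  0 < t < 1 -> irrational y ->
  Z.odd c = false -> Z.odd d = true -> (0 < d < mQ (gstep M a e))%Z ->
  IZR c / IZR d <> IZR (mP M) / IZR (mQ M) ->
  Rabs (IZR (mQ M) * y - IZR (mP M)) < Rabs (IZR d * y - IZR c).
Proof.
  intros Hinv Hy HD HBd Ht Hirr Hc Hd Hdq Hne.
  pose proof Hinv as [HQ [HB [Hdet [HA [HP HQo]]]]].
  destruct (decomp _ _ _ _ c d Hdet) as [u [v [E1 E2]]].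
  destruct (parity_uv _ _ _ _ _ _ _ _ HA HP HQo Hc Hd E1 E2) as [Hu Hv].
  assert (Hu0 : u <> 0%Z).
  { intro U. subst u. apply Hne. simpl in E1, E2. subst c d.
    rewrite !mult_IZR. assert (IZR v <> 0) by (apply not_0_IZR; intro X; subst; discriminate).
    assert (IZR (mQ M) <> 0) by (apply not_0_IZR; lia). field. auto. }
  assert (Hden : 0 < IZR (mB M) * t + IZR (mQ M)) by (apply minvo_den; auto; lra).
  assert (Hti : forall r s : Z, s <> 0%Z -> t <> IZR r / IZR s).
  { intros r s Hs. apply (mob_rat y M t r s Hirr Hy); auto. lra. }
  assert (Hae : (1 <= a /\ (e = 1 \/ e = -1) /\ (e = -1 -> 2 <= a))%Z) by (unfold oocf_D in HD; lia).
  destruct Hae as [Ha [He Ha2]].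
  assert (Hb1 : e = 1%Z -> t * (2 * IZR a + 1) <= 2).
  { intro E. subst e. destruct HBd as [[_ [H1 _]]|[X _]]; [|discriminate].
    assert (1 <= IZR a) by (apply IZR_le; lia).
    apply div_le_iff in H1; lra. }
  assert (Hb2 : e = (-1)%Z -> t * (IZR a - 1) <= 1).
  { intro E. subst e. destruct HBd as [[X _]|[_ H1]]; [discriminate|]. cbv zeta in H1.
    destruct H1 as [H1 _]. specialize (Ha2 eq_refl).
    assert (2 <= IZR a) by (apply IZR_le; lia).
    apply div_le_iff in H1; lra. }
  apply (core (mA M) (mP M) (mB M) (mQ M) c d u v y t E1 E2).
  - rewrite Hy. apply mob_rel. exact Hden.
  - lra.
  - apply (ineq_O (mB M) (mQ M) d u v a e t Hu Hu0 Hv HB HQ E2); try lia; auto.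
    unfold gstep in Hdq. cbn [mQ] in Hdq. lia.
  - apply irr_ne; auto.
Qed.

Lemma ME_Q2 b eta (Hd : forall i, (1 <= i)%nat -> edig (b i) (eta i)) n :
  (1 <= n)%nat -> (2 <= mQ (ME b eta n))%Z.
Proof.
  induction n as [|n IH]; intro Hn; [lia|].
  destruct (Hd (S n) ltac:(lia)) as [Hb _].
  destruct (ME_inv b eta n Hd) as [[HQ [HB _]] _].
  simpl. unfold estep. cbn [mQ].
  destruct n as [|n].
  - simpl. lia.
  - specialize (IH ltac:(lia)). nia.
Qed.

Lemma find_interval (f : nat -> Z) X : (forall k, (f k < f (S k))%Z) -> (f 0%nat <= X)%Z ->
  exists m, (f m <= X < f (S m))%Z.
Proof.
  intros Hf H0.
  assert (Hg : forall k, (f 0%nat + Z.of_nat k <= f k)%Z).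
  { induction k; simpl; [lia|]. specialize (Hf k). lia. }
  assert (Hc : forall N, (exists m, (f m <= X < f (S m))%Z) \/ (f N <= X)%Z).
  { induction N as [|N IH]; [right; exact H0|].
    destruct IH as [IH|IH]; [left; exact IH|].
    destruct (Z_lt_le_dec X (f (S N))); [left; exists N; lia|right; lia]. }
  destruct (Hc (S (Z.to_nat (X - f 0%nat)))) as [h|h]; [exact h|].
  specialize (Hg (S (Z.to_nat (X - f 0%nat)))). lia.
Qed.


Theorem mainTheorem12 (x : R) (hx0 : 0 < x) (hx1 : x < 1) (hirr : irrational x)
  (b eta : nat -> Z)
  (hexp : forall n : nat, (1 <= n)%nat ->
            eicf_digit_ok (Nat.iter (n - 1) TE (1 - x)) (b n) (eta n))
  (n : nat) (hn : (1 <= n)%nat) (p q : Z)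
  (hq : (0 < q)%Z) (hpq : Z.gcd p q = 1%Z)
  (hconv : IZR p / IZR q = eicf_conv b eta n)
  (hPodd : Z.odd (q - p) = true) (hQodd : Z.odd q = true) :
  best_one_rational_approx x (q - p) q /\
  oocf_principal_convergent x (q - p) q.
Proof.
  assert (hirr' : irrational (1 - x)).
  { intros r s Hs E. apply (hirr (s - r)%Z s Hs).
    assert (IZR s <> 0) by (apply not_0_IZR; exact Hs).
    rewrite minus_IZR. apply Rmult_eq_reg_r with (IZR s); auto.
    field_simplify; auto. apply (f_equal (fun w => w * IZR s)) in E.
    field_simplify in E; auto. lra. }
  set (y := 1 - x) in *.
  assert (Hd : forall i, (1 <= i)%nat -> edig (b i) (eta i))
    by (intros i Hi; exact (digit_ok_edig _ _ _ (hexp i Hi))).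
  set (M := ME b eta n).
  destruct (ME_inv b eta n Hd) as [Hinv HB0]. specialize (HB0 hn). fold M in Hinv, HB0.
  assert (HPQ : p = mP M /\ q = mQ M).
  { apply frac_eq_int; auto.
    - destruct Hinv as [HQ _]; exact HQ.
    - destruct Hinv as [_ [_ [Hdet _]]]. eapply det_gcd; exact Hdet.
    - rewrite hconv. rewrite (eicf_conv_ME b eta Hd n hn). fold M. unfold mob.
      f_equal; ring. }
  destruct HPQ as [HPp HQq].
  set (t := Nat.iter n TE y).
  assert (Hy : y = mob M t) by (apply ME_y; exact hexp).
  assert (Ht : 0 < t < 1).
  { pose proof (hexp (S n) ltac:(lia)) as H1. replace (S n - 1)%nat with n in H1 by lia.
    destruct (te_step _ _ _ H1) as [[T1 T2] _]. fold t in T1, T2. split; auto.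
    destruct T2 as [T2|T2]; auto. exfalso.
    apply (mob_rat y M t 1 1 hirr' Hy).
    - destruct Hinv as [HQ [HB _]].
      assert (- IZR (mQ M) < IZR (mB M) < IZR (mQ M)) by (rewrite <- opp_IZR; split; apply IZR_lt; lia).
      nra.
    - lia.
    - rewrite T2. field. }
  assert (Hpe : Z.odd p = false).
  { rewrite Z.odd_sub, hQodd in hPodd. destruct (Z.odd p); auto. }
  assert (HQo : Z.odd (mQ M) = true) by (rewrite <- HQq; exact hQodd).
  split.
  -
    split.
    + unfold one_rational. repeat split; auto. apply gcd_sub; auto.
    + intros a' b' [Hb' [_ [Ha'o Hb'o]]] Hne Hbq.
      assert (Hb'0 : IZR b' <> 0) by (apply not_0_IZR; lia).
      assert (Hq0 : IZR q <> 0) by (apply not_0_IZR; lia).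
      assert (E := eicf_best M y t (b' - a') b' Hinv HB0 HQo Hy Ht hirr').
      rewrite <- HPp, <- HQq in E.
      replace (IZR q * x - IZR (q - p)) with (- (IZR q * y - IZR p)) by (unfold y; rewrite minus_IZR; ring).
      replace (IZR b' * x - IZR a') with (- (IZR b' * y - IZR (b' - a'))) by (unfold y; rewrite minus_IZR; ring).
      rewrite !Rabs_Ropp. apply E.
      * rewrite Z.odd_sub, Ha'o, Hb'o. reflexivity.
      * exact Hb'o.
      * lia.
      * intro X. apply Hne. rewrite !minus_IZR in *.
        apply (f_equal (fun w => 1 - w)) in X.
        replace (1 - (IZR b' - IZR a') / IZR b') with (IZR a' / IZR b') in X by (field; auto).
        rewrite X. field. auto.
  -
    set (a := aa x). set (e := ee x).
    assert (hx : 0 < x < 1) by lra.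
    assert (HDall : forall i, (1 <= i)%nat -> oocf_D (a i) (e i)).
    { intros i Hi. destruct (orbit x hx hirr' (i - 1)) as [_ [_ [_ [D _]]]].
      replace (S (i - 1)) with i in D by lia. exact D. }
    set (f := fun k => mQ (MO a e k)).
    assert (Hf : forall k, (f k < f (S k))%Z).
    { intro k. unfold f. simpl MO. apply gstep_inv; [apply MO_inv; auto|apply HDall; lia]. }
    destruct (find_interval f q Hf ltac:(unfold f; simpl; lia)) as [m [Hm1 Hm2]].
    unfold f in Hm1, Hm2. cbv beta in Hm1, Hm2.
    set (N := MO a e m) in *.
    destruct (orbit x hx hirr' m) as [Hz [HinvN [HyN [HDm HBm]]]].
    fold a e N in HinvN, HyN, HDm, HBm. fold y in HyN.
    set (t' := 1 - zz x m) in *.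
    assert (Ht' : 0 < t' < 1).
    { split; [unfold t'; lra|].
      destruct (Rlt_le_dec 0 (zz x m)) as [h|h]; [unfold t'; lra|exfalso].
      apply (mob_rat y N t' 1 1 hirr' HyN).
      - apply Rgt_not_eq, Rlt_gt, minvo_den; auto. unfold t'; lra.
      - lia.
      - unfold t'. assert (zz x m = 0) by lra. rewrite H. field. }
    assert (HBm' : oocf_B (a (S m)) (e (S m)) (1 - t')) by (unfold t'; replace (1 - (1 - zz x m)) with (zz x m) by ring; exact HBm).
    assert (Eq : IZR p / IZR q = IZR (mP N) / IZR (mQ N)).
    { destruct (Req_dec (IZR p / IZR q) (IZR (mP N) / IZR (mQ N))) as [E|Ne]; auto. exfalso.
      destruct HinvN as [HQN [HBN [HdetN [HAN [HPN HQN']]]]].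
      assert (Hle : (0 < mQ N <= mQ M)%Z) by (rewrite <- HQq; split; [exact HQN | exact Hm1]).
      assert (E1 := eicf_best M y t (mP N) (mQ N) Hinv HB0 HQo Hy Ht hirr' HPN HQN'
                     Hle ltac:(rewrite <- HPp, <- HQq; intro X; apply Ne; symmetry; exact X)).
      assert (HinvN' : minvo N) by exact (conj HQN (conj HBN (conj HdetN (conj HAN (conj HPN HQN'))))). 
      assert (Hq2 : (0 < q < mQ (gstep N (a (S m)) (e (S m))))%Z).
      { change (MO a e (S m)) with (gstep N (a (S m)) (e (S m))) in Hm2. split; auto. }
      assert (E2 := oocf_strong N y t' (a (S m)) (e (S m)) p q
                     HinvN' HyN HDm HBm' Ht' hirr' Hpe hQodd Hq2 Ne).
      rewrite <- HPp, <- HQq in E1. lra. }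
    assert (Hm0 : (1 <= m)%nat).
    { destruct m as [|m]; [exfalso|lia].
      assert (E0 : IZR p / IZR q = 0) by (rewrite Eq; unfold N; simpl; field).
      assert (IZR q <> 0) by (apply not_0_IZR; lia).
      assert (Hp0 : IZR p = 0).
      { replace (IZR p) with (IZR p / IZR q * IZR q) by (field; auto). rewrite E0. ring. }
      apply eq_IZR in Hp0. rewrite Hp0, Z.gcd_0_l in hpq.
      pose proof (ME_Q2 b eta Hd n hn) as HQ2. fold M in HQ2. lia. }
    exists a, e. split.
    + intros k Hk. destruct (orbit x hx hirr' (k - 1)) as [_ [_ [_ [D B]]]].
      replace (S (k - 1)) with k in D, B by lia. split; [exact D|exact B].
    + exists m. split; auto.
      rewrite (oocf_conv_MO a e HDall m Hm0). fold N.
      unfold mob. rewrite minus_IZR.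
      replace ((IZR (mA N) * 0 + IZR (mP N)) / (IZR (mB N) * 0 + IZR (mQ N))) with (IZR (mP N) / IZR (mQ N))
        by (f_equal; ring).
      rewrite <- Eq. field. apply not_0_IZR. lia.
Qed.
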